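(* Let $\langle N,P,c,b,\mathcal{A}\rangle$ be a PB instance satisfying the High Cardinality Budget Property ($l_o>h_{\mathcal{A}}$), and let $S$ be the output of the minimax-disutility version of Ordered-Relax on it. Then $ALG\le\left(2-\frac{1}{h_o}\right)OPT$, where $ALG=\max_{i\in N}(b-u_i(S))$ and $OPT=\min_{T\subseteq P,\,c(T)\le b}\max_{i\in N}(b-u_i(T))$.
   Context: A PB instance is $\langle N,P,c,b,\mathcal{A}\rangle$ with voters $N=\{1,\dots,n\}$, projects $P=\{p_1,\dots,p_m\}$, costs $c:P\to\mathbb{N}$, budget $b\in\mathbb{N}$, and approval sets $A_i\subseteq P$. $c(S)=\sum_{p\in S}c(p)$; $S$ is feasible if $c(S)\le b$; $u_i(S)=c(S\cap A_i)$; the disutility of voter $i$ from $S$ is $b-u_i(S)$. The ordered-fill algorithm with respect to a complete order $\succ$ on $P$ adds projects from highest- to lowest-ranked, stopping as soon as the next project does not fit within the budget. $l_o$ and $h_o$ denote the minimum and maximum cardinality of the outputs of ordered-fill algorithms over all complete orders on $P$; $h_{\mathcal{A}}=\max_{i\in N}|A_i|$. The instance satisfies the High Cardinality Budget Property if $l_o>h_{\mathcal{A}}$. The minimax-disutility Ordered-Relax algorithm: compute an optimal solution $(q^*,x^* )$ of the LP: minimize $q$ subject to $q\ge b-\sum_{p\in A_i}c(p)x_p$ for all $i\in N$, $\sum_{p\in P}c(p)x_p\le b$, $0\le x_p\le1$ for all $p$, $q\ge0$; then order projects in non-increasing order of $c(p)x^*_p$ (ties arbitrary), and starting from $S=\emptyset$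 add projects in this order, stopping as soon as the next project does not fit within the budget; output $S$. *)

(* Defs.v *)
From HB Require Import structures.
From mathcomp Require Import all_boot all_order all_algebra all_fingroup.
Set Implicit Arguments. Unset Strict Implicit. Unset Printing Implicit Defensive.
Import Order.TTheory GRing.Theory Num.Theory.

(* A PB instance: voters 'I_n, projects 'I_m, costs c : 'I_m -> nat,
   budget b : nat, approval sets A : 'I_n -> {set 'I_m}. *)

Section PB.
Variables (n m : nat) (c : 'I_m -> nat) (b : nat) (A : 'I_n -> {set 'I_m}).

Definition cost (S : {set 'I_m}) : nat := \sum_(p in S) c p.

Definition feasible (S : {set 'I_m}) : bool := cost S <= b.

Definition util (i : 'I_n) (S : {set 'I_m}) : nat := cost (S :&: A i).

(* disutility b - u_i(S) (nat subtraction; exact for feasible S since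
   u_i(S) <= c(S) <= b) *)
Definition disutil (i : 'I_n) (S : {set 'I_m}) : nat := b - util i S.

Definition maxdis (S : {set 'I_m}) : nat := \max_(i < n) disutil i S.

(* OPT = min over feasible T of max_i (b - u_i(T)); the empty set is feasible,
   and its value is <= b, so the default b of the min is harmless. *)
Definition OPT : nat := \big[minn/b]_(T : {set 'I_m} | feasible T) maxdis T.

Fixpoint fill_seq (acc : {set 'I_m}) (s : seq 'I_m) : {set 'I_m} :=
  match s with
  | [::] => acc
  | p :: s' => if cost acc + c p <= b then fill_seq (p |: acc) s' else acc
  end.

(* A complete order on P is given by a permutation sigma: sigma 0 is the
   highest-ranked project, sigma 1 the next, etc. *)
Definition order_seq (sigma : {perm 'I_m}) : seq 'I_m :=
  [seq sigma i | i <- enum 'I_m].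

Definition ordered_fill (sigma : {perm 'I_m}) : {set 'I_m} :=
  fill_seq set0 (order_seq sigma).

(* l_o, h_o: min / max cardinality of ordered-fill outputs over all orders.
   (Cardinalities are <= m, so the default m of the min is harmless.) *)
Definition l_o : nat := \big[minn/m]_(sigma : {perm 'I_m}) #|ordered_fill sigma|.
Definition h_o : nat := \max_(sigma : {perm 'I_m}) #|ordered_fill sigma|.

Definition h_A : nat := \max_(i < n) #|A i|.

Definition HCBP : Prop := (h_A < l_o)%N.

Local Open Scope ring_scope.

Definition lp_feasible (R : realFieldType) (q : R) (x : 'I_m -> R) : Prop :=
  [/\ forall i : 'I_n, q >= b%:R - \sum_(p in A i) (c p)%:R * x p,
      \sum_(p : 'I_m) (c p)%:R * x p <= b%:R,
      forall p : 'I_m, 0 <= x p /\ x p <= 1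
    & 0 <= q].

Definition lp_optimal (R : realFieldType) (q : R) (x : 'I_m -> R) : Prop :=
  lp_feasible q x /\
  forall (q' : R) (x' : 'I_m -> R), lp_feasible q' x' -> q <= q'.

Definition nonincr_order (R : realFieldType) (x : 'I_m -> R)
    (sigma : {perm 'I_m}) : Prop :=
  forall i j : 'I_m, (i <= j)%N ->
    (c (sigma j))%:R * x (sigma j) <= (c (sigma i))%:R * x (sigma i).

End PB.

(* Main.v *)
Require Import Defs.
From HB Require Import structures.
From mathcomp Require Import all_boot all_order all_algebra all_fingroup.
From mathcomp Require Import zify ring lra.
Import Order.TTheory GRing.Theory Num.Theory.
Local Open Scope ring_scope.

Lemma fill_prefix (m : nat) (c : 'I_m -> nat) (b : nat) (s : seq 'I_m) :
  forall acc, exists k, fill_seq c b acc s = acc :|: [set y | y \in take k s].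
Proof.
elim: s => [|p s IH] acc /=.
  by exists 0%N; apply/setP => y; rewrite !inE /= ?in_nil ?orbF.
case: ifP => _.
  have [k ->] := IH (p |: acc); exists k.+1; apply/setP => y.
  by rewrite !inE /= orbA (orbC (y == p)).
by exists 0%N; apply/setP => y; rewrite !inE /= ?in_nil ?orbF.
Qed.

Lemma fill_order (R : realFieldType) (m : nat) (c : 'I_m -> nat) (b : nat)
  (x : 'I_m -> R) (sigma : {perm 'I_m}) (Hord : nonincr_order c x sigma) :
  forall y p, y \in ordered_fill c b sigma -> p \notin ordered_fill c b sigma ->
    (c p)%:R * x p <= (c y)%:R * x y.
Proof.
rewrite /ordered_fill; have [k ->] := fill_prefix _ c b (order_seq sigma) set0.
move=> y p; rewrite !inE /= /order_seq -map_take.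
case/mapP => j Hj ->.
have -> : p = sigma ((sigma^-1)%g p) by rewrite permKV.
move=> Hp; apply: Hord.
have Hj' : (j < k)%N by rewrite -[X in (X < _)%N](index_enum_ord j) -in_take // mem_enum.
set j' := ((sigma^-1)%g p).
have : j' \notin take k (enum 'I_m).
  by apply: contra Hp => H; apply: map_f.
rewrite in_take ?mem_enum // index_enum_ord -leqNgt => H.
exact: leq_trans (ltnW Hj') H.
Qed.

Lemma voter_bound (R : realFieldType) (n m : nat) (c : 'I_m -> nat) (b : nat)
    (A : 'I_n -> {set 'I_m}) (q : R) (x : 'I_m -> R) (S : {set 'I_m})
    (i : 'I_n) (h : nat)
    (Hlp : lp_feasible c b A q x)
    (Hsp : forall y p, y \in S -> p \notin S -> (c p)%:R * x p <= (c y)%:R * x y)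
    (Hcard : (#|A i| < #|S|)%N) (Hh : (#|A i :\: S|.+1 <= h)%N) :
  (b%:R - (util c A i S)%:R) <= (2 - (h%:R)^-1) * q.
Proof.
case: Hlp => Hq Hb Hx Hq0.
set w := fun p => (c p)%:R * x p.
have w0 : forall p, 0 <= w p.
  by move=> p; rewrite /w mulr_ge0 //; case: (Hx p).
have wc : forall p, w p <= (c p)%:R.
  move=> p; rewrite /w; case: (Hx p) => _ H1.
  by rewrite -[X in _ <= X]mulr1 ler_wpM2l.
set B := A i :\: S; set D := S :\: A i.
set sB := \sum_(p in B) w p; set sD := \sum_(p in D) w p.
set k := #|B|.
have HD : (k.+1 <= #|D|)%N.
  have := cardsID S (A i); have := cardsID (A i) S.
  rewrite setIC /k /B /D; lia.
have key : (#|D|%:R * sB <= k%:R * sD).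
  have H1 : forall d, d \in D -> sB <= k%:R * w d.
    move=> d Hd; rewrite /sB /k -sum1_card natr_sum mulr_suml.
    apply: ler_sum => p Hp; rewrite mul1r; apply: Hsp.
      by move: Hd; rewrite inE => /andP [].
    by move: Hp; rewrite inE => /andP [].
  rewrite /sD mulr_sumr -sum1_card natr_sum mulr_suml.
  by apply: ler_sum => d Hd; rewrite mul1r; apply: H1.
have Hsplit : \sum_(p in A i) w p = \sum_(p in A i :&: S) w p + sB.
  by rewrite (big_setID S).
have Hall : \sum_(p in A i) w p + sD <= b%:R.
  apply: le_trans Hb.
  rewrite [X in _ <= X](bigID (fun p => p \in A i)) /=.
  idtac.

  apply: lerD; first by apply: le_refl.
  rewrite /sD big_mkcond [X in _ <= X]big_mkcond /=.
  apply: ler_sum => p _; rewrite inE.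
  by case: (p \in A i); case: (p \in S) => /=; rewrite ?lexx //; apply: w0.
have Hu : \sum_(p in A i :&: S) w p <= (util c A i S)%:R.
  rewrite /util /cost natr_sum setIC; apply: ler_sum => p _; exact: wc.
have HqA := Hq i.
have sD0 : 0 <= sD by apply: sumr_ge0 => p _.
have sB0 : 0 <= sB by apply: sumr_ge0 => p _.
have Hk1 : (k.+1)%:R <= #|D|%:R :> R by rewrite ler_nat.
have Hkh : (k.+1)%:R <= h%:R :> R by rewrite ler_nat.
have Hh0 : 0 < h%:R :> R by rewrite ltr0n; apply: leq_trans Hh.
have key2 : (k.+1)%:R * sB <= k%:R * q.
  apply: le_trans (ler_wpM2r sB0 Hk1) _.
  apply: le_trans key _.
  apply: ler_wpM2l; first by rewrite ler0n.
  lra.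
have Hbound : h%:R * (q - sB) >= q.
  have : (k.+1)%:R * (q - sB) >= q by rewrite -natr1 in key2 *; nra.
  move=> H; have H2 := H; apply: le_trans H2 _.
  apply: ler_wpM2r => //.
  have Kp : 0 < (k.+1)%:R :> R by rewrite ltr0n.
  by rewrite -(pmulr_rge0 _ Kp); apply: le_trans Hq0 H.
set y := (h%:R)^-1.
have hy : h%:R * y = 1 by rewrite /y mulfV // gt_eqF.
have y0 : 0 < y by rewrite /y invr_gt0.
nra.
Qed.

Lemma bigmin_leq_seq (I : eqType) (r : seq I) (F : I -> nat) d j :
  j \in r -> (\big[minn/d]_(i <- r) F i <= F j)%N.
Proof.
elim: r => // a r IH; rewrite inE big_cons => /orP [/eqP -> | H].
  exact: geq_minl.
exact: leq_trans (geq_minr _ _) (IH H).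
Qed.

Lemma natr_subB (R : realFieldType) (a b : nat) : a%:R - b%:R <= (a - b)%N%:R :> R.
Proof.
case: (leqP b a) => H; first by rewrite natrB.
have -> : (a - b)%N = 0%N by apply/eqP; rewrite subn_eq0 ltnW.
by rewrite subr_le0 ler_nat ltnW.
Qed.

Theorem theorem8 (R : realFieldType) (n m : nat) (c : 'I_m -> nat) (b : nat)
    (A : 'I_n -> {set 'I_m})
    (HCB : HCBP c b A)
    (q : R) (x : 'I_m -> R) (Hopt : lp_optimal c b A q x)
    (sigma : {perm 'I_m}) (Hord : nonincr_order c x sigma) :
  let S := ordered_fill c b sigma in
  ((maxdis c b A S)%:R : R)
    <= (2 - ((h_o c b)%:R)^-1) * (OPT c b A)%:R.
Proof.
cbv zeta; set S := ordered_fill c b sigma.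
have Hsp := @fill_order R m c b x sigma Hord.
have HlS : (l_o c b <= #|S|)%N.
  by apply: bigmin_leq_seq; rewrite mem_index_enum.
have HSh : (#|S| <= h_o c b)%N by apply: (@leq_bigmax _ (fun s => #|ordered_fill c b s|)).
have HAi : forall i, (#|A i| < #|S|)%N.
  move=> i; apply: leq_trans HlS; apply: leq_ltn_trans HCB.
  by apply: (@leq_bigmax _ (fun i => #|A i|)).
have Hh0 : (0 < h_o c b)%N.
  apply: leq_trans HSh; apply: leq_trans HlS.
  exact: leq_ltn_trans (leq0n _) HCB.
case: Hopt => Hfeas Hmin.
have Hq0 : 0 <= q by case: Hfeas.
have HqOPT : q <= (OPT c b A)%:R.
  rewrite /OPT; apply: (big_rec (fun y : nat => q <= y%:R)).
    apply: (Hmin b%:R (fun _ => 0)); split.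
    - by move=> i; rewrite big1 ?subr0 // => p _; rewrite mulr0.
    - by rewrite big1 ?ler0n // => p _; rewrite mulr0.
    - by move=> p; rewrite lexx ler01.
    - by rewrite ler0n.
  move=> T y HT Hy.
  rewrite /minn; case: ifP => _ //.
  apply: (Hmin _ (fun p => (p \in T)%:R)); split.
  - move=> i.
    have -> : \sum_(p in A i) (c p)%:R * ((p \in T)%:R : R) = (util c A i T)%:R.
      rewrite /util /cost natr_sum big_mkcond [RHS]big_mkcond /=.
      apply: eq_bigr => p _; rewrite !inE.
      by case: (p \in T); case: (p \in A i); rewrite /= ?mulr1 ?mulr0.
    apply: le_trans (natr_subB R b (util c A i T)) _.
    rewrite ler_nat; exact: (@leq_bigmax _ (fun i => disutil c b A i T)).
  - apply: (@le_trans _ _ (cost c T)%:R); last by rewrite ler_nat.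
    rewrite le_eqVlt; apply/orP; left; apply/eqP.
    rewrite /cost natr_sum [RHS]big_mkcond /=.
    apply: eq_bigr => p _.
    by case: (p \in T); rewrite /= ?mulr1 ?mulr0.
  - by move=> p; case: (p \in T); rewrite /= ?lexx ?ler01.
  - by rewrite ler0n.
have Hc : 0 <= 2 - (h_o c b)%:R^-1 :> R.
  have : (h_o c b)%:R^-1 <= 1 :> R by rewrite invf_le1 ?ler1n ?ltr0n.
  lra.
rewrite /maxdis; apply: (big_rec (fun y : nat => y%:R <= _)).
  by rewrite mulr_ge0 ?ler0n.
move=> i y _ Hy; rewrite /maxn; case: ifP => _ //.
rewrite /disutil.
case: (leqP (util c A i S) b) => Hub.
  rewrite natrB //.
  apply: le_trans (@voter_bound R n m c b A q x S i (h_o c b) _ Hsp (HAi i) _) _.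
  - by apply: Hfeas.
  - exact: leq_trans (leq_ltn_trans (subset_leq_card (subsetDl _ _)) (HAi i)) HSh.
  by apply: ler_wpM2l.
have -> : (b - util c A i S)%N = 0%N by apply/eqP; rewrite subn_eq0 ltnW.
by rewrite mulr_ge0 ?ler0n.
Qed.
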